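(* Let $p$ be a prime number of the form $p = 5m^2 + 4mn + 9n^2$ with integers $m, n$. Then the equation $p x^4 - 41 y^4 = z^2$ has no rational solutions $(x,y,z)$ other than the trivial solution $x=y=z=0$. *)

(* Defs.v *)
From mathcomp Require Import all_boot all_order all_algebra.

(* Main.v *)
Require Import Defs.
From mathcomp Require Import all_boot all_order all_algebra.
From mathcomp Require Import zify ring lra.

Lemma sq_cop (a b w : nat) : coprime a b -> a * b = w ^ 2 -> a = (gcdn a w) ^ 2.
Proof.
move=> cab eq.
apply/eqP; rewrite eqn_dvd; apply/andP; split.
  rewrite expnS expn1 muln_gcdl dvdn_gcd dvdn_mulr //=.
  rewrite muln_gcdr dvdn_gcd dvdn_mull //=.
  have -> : w * w = w ^ 2 by rewrite expnS expn1.
  by rewrite -eq dvdn_mulr.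
set g := gcdn a w.
have cgb : coprime (g ^ 2) b.
  by rewrite coprime_pexpl //; apply: coprime_dvdl cab; exact: dvdn_gcdl.
rewrite -(Gauss_dvdr _ cgb) mulnC eq dvdn_exp2r //; exact: dvdn_gcdr.
Qed.

Lemma sq_cop' (a b w : nat) : coprime a b -> a * b = w ^ 2 -> exists d, b = d ^ 2.
Proof.
move=> cab eq; exists (gcdn b w); apply: (@sq_cop b a); first by rewrite coprime_sym.
by rewrite mulnC.
Qed.

Lemma odd_sq8 c : odd c -> c ^ 2 %% 8 = 1.
Proof.
move=> oc; rewrite -modnXm.
have : c %% 8 < 8 by rewrite ltn_pmod.
have : odd (c %% 8) by rewrite odd_mod.
move: (c %% 8) => k; do 8! (case: k => [|k] //).
Qed.

Arguments sq_cop {a b w}. Arguments sq_cop' {a b w}.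

Lemma gcd1 a b : (forall g, g %| a -> g %| b -> g %| 1) -> coprime a b.
Proof. by move=> H; rewrite /coprime -dvdn1; apply: H; [exact: dvdn_gcdl|exact: dvdn_gcdr]. Qed.

Lemma odd_sqE c : odd (c ^ 2) = odd c. Proof. by rewrite oddX. Qed.

Lemma pyth (r s t : nat) : r^2 + 41*s^2 = t^2 -> coprime r t -> t %% 4 = 3 ->
  (forall d, t %% 41 != d^2 %% 41) -> False.
Proof.
move=> eq crt t4 nq.
have tr : r <= t by rewrite -leq_sqr -eq leq_addr.
have ot : odd t by rewrite -(odd_mod t (erefl : odd 4 = false)) t4.
have p41 : prime 41 by [].
case: (boolP (odd r)) => orr.
- have es : ~~ odd s.
    apply/negP => os; move: (congr1 odd eq).
    by rewrite oddD !oddX !oddM orr os ot.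
  have ets : ~~ odd (t - r) by rewrite oddB // ot orr.
  set u := (t - r)./2.
  have tu : t = r + u.*2 by rewrite /u halfK (negbTE ets) subn0 subnKC.
  have ss : s = (s./2).*2 by rewrite halfK (negbTE es) subn0.
  set s' := s./2 in ss.
  have e2 : u * (u + r) = 41 * s' ^ 2.
    move: eq; rewrite tu ss; rewrite -!mul2n; nia.
  have cu : coprime u (u + r).
    apply: gcd1 => g g1 g2.
    have gr : g %| r by rewrite -(dvdn_addr _ g1).
    rewrite -(eqP crt) dvdn_gcd gr /= tu -mul2n.
    by rewrite dvdn_add // dvdn_mull.
  have : 41 %| u * (u + r) by rewrite e2 dvdn_mulr.
  rewrite Euclid_dvdM //; case/orP => /dvdnP [k hk].
  + have e3 : k * (u + r) = s' ^ 2.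
      by apply/eqP; rewrite -(eqn_pmul2l (isT : 0 < 41)) mulnA (mulnC 41) -hk e2.
    have ck : coprime k (u + r) by apply: coprime_dvdl cu; rewrite hk dvdn_mulr.
    have [d hd] := sq_cop' ck e3.
    apply: (negP (nq d)); apply/eqP.
    have -> : t = k * 41 + d ^ 2 by rewrite -hd -hk tu; lia.
    by rewrite modnMDl.
  + have e3 : u * k = s' ^ 2.
      by apply/eqP; rewrite -(eqn_pmul2l (isT : 0 < 41)) mulnCA (mulnC 41) -hk e2.
    have ck : coprime u k by apply: coprime_dvdr cu; rewrite hk dvdn_mulr.
    have hd := sq_cop ck e3.
    apply: (negP (nq (gcdn u s'))); apply/eqP.
    have -> : t = k * 41 + (gcdn u s') ^ 2 by rewrite -hd -hk tu; lia.
    by rewrite modnMDl.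
- have os : odd s.
    case: (boolP (odd s)) => // /negbTE os; move: (congr1 odd eq).
    by rewrite oddD !oddX !oddM (negbTE orr) os ot.
  set u := t - r.
  have tu : t = r + u by rewrite /u subnKC.
  have ou : odd u by rewrite /u oddB // ot (negbTE orr).
  have e2 : u * (u + r.*2) = 41 * s ^ 2.
    move: eq; rewrite tu -!mul2n; nia.
  have cu : coprime u (u + r.*2).
    apply: gcd1 => g g1 g2.
    have g2r : g %| 2 * r by rewrite -(dvdn_addr _ g1) mul2n.
    have cg2 : coprime g 2.
      rewrite coprimen2; apply/negPn; rewrite -dvdn2; apply/negP => h2.
      by move: (dvdn_trans h2 g1); rewrite dvdn2 ou.
    have gr : g %| r by rewrite -(Gauss_dvdr _ cg2).
    rewrite -(eqP crt) dvdn_gcd gr /= tu.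
    by rewrite dvdn_add.
  have fin : forall c d, odd c -> odd d -> t.*2 = c ^ 2 * 41 + d ^ 2 -> False.
    move=> c d oc od ht.
    move: (odd_sq8 _ oc) (odd_sq8 _ od) ht t4.
    move: (c ^ 2) (d ^ 2) => C D; lia.
  have : 41 %| u * (u + r.*2) by rewrite e2 dvdn_mulr.
  rewrite Euclid_dvdM //; case/orP => /dvdnP [k hk].
  + have e3 : k * (u + r.*2) = s ^ 2.
      by apply/eqP; rewrite -(eqn_pmul2l (isT : 0 < 41)) mulnA (mulnC 41) -hk e2.
    have ck : coprime k (u + r.*2) by apply: coprime_dvdl cu; rewrite hk dvdn_mulr.
    have hc := sq_cop ck e3.
    have [d hd] := sq_cop' ck e3.
    apply: (fin (gcdn k s) d).
    * by rewrite -odd_sqE -hc; move: ou; rewrite hk oddM andbC /= => ->.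
    * by rewrite -odd_sqE -hd oddD ou odd_double.
    * by rewrite -hc -hd -hk tu; lia.
  + have e3 : u * k = s ^ 2.
      by apply/eqP; rewrite -(eqn_pmul2l (isT : 0 < 41)) mulnCA (mulnC 41) -hk e2.
    have ck : coprime u k by apply: coprime_dvdr cu; rewrite hk dvdn_mulr.
    have hc := sq_cop ck e3.
    have [d hd] := sq_cop' ck e3.
    have ok : odd k.
      by move: (congr1 odd hk); rewrite oddD ou odd_double oddM andbC /= => <-.
    apply: (fin d (gcdn u s)).
    * by rewrite -odd_sqE -hd.
    * by rewrite -odd_sqE -hc.
    * by rewrite -hc -hd -hk tu; lia.
Qed.

Lemma cop_prime a b : (forall q, prime q -> q %| a -> q %| b -> False) -> coprime a b.
Proof.
move=> H; rewrite /coprime; set g := gcdn a b.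
have ga : g %| a by exact: dvdn_gcdl.
have gb : g %| b by exact: dvdn_gcdr.
case: g ga gb => [|[|g]] ga gb //.
- by case: (H 2 isT); [apply: dvdn_trans ga|apply: dvdn_trans gb].
- have := pdiv_prime (isT : 1 < g.+2) => pq.
  by case: (H _ pq); [apply: dvdn_trans ga|apply: dvdn_trans gb]; exact: pdiv_dvd.
Qed.

Lemma nq41_all : all (fun x => all (fun e => ((3 * x^2) %% 41 != e^2 %% 41) && ((27 * x^2) %% 41 != e^2 %% 41)) (iota 0 41)) (iota 1 40).
Proof. by vm_compute. Qed.

Lemma nq41 N X d : (N = 3 \/ N = 27) -> ~~ (41 %| X) -> (N * X ^ 2) %% 41 != d ^ 2 %% 41.
Proof.
move=> hN nX.
have e1 : N * X^2 = N * (X %% 41)^2 %[mod 41].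
  by rewrite -(modnMmr N (X^2)) -(modnMmr N ((X %% 41)^2)) modnXm.
rewrite e1 -(modnXm 2 41 d).
have hx : X %% 41 \in iota 1 40.
  rewrite mem_iota; apply/andP; split; last by rewrite add1n ltn_pmod.
  by rewrite lt0n; apply: contra nX => /eqP; move/eqP; rewrite -/(dvdn 41 X).
have he : d %% 41 \in iota 0 41 by rewrite mem_iota ltn_pmod.
move: (allP nq41_all _ hx) => /allP /(_ _ he) /andP [h1 h2].
by case: hN => ->.
Qed.

Lemma t4 N X : (N = 3 \/ N = 27) -> odd X -> (N * X ^ 2) %% 4 = 3.
Proof.
move=> hN oX; have := odd_sq8 _ oX; move: (X ^ 2) => Y.
by case: hN => ->; lia.
Qed.

Lemma no205 (A N : nat) : (A ^ 2 + 41 * N ^ 2 != 205)%N.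
Proof.
apply/eqP => h.
have hA : (A < 15)%N by rewrite ltnNge -(leq_exp2r _ _ (isT : 0 < 2)%N); apply/negP => h'; move: h h'; move: (A ^ 2)%N (N ^ 2)%N => a b; lia.
have hN : (N < 3)%N by rewrite ltnNge -(leq_exp2r _ _ (isT : 0 < 2)%N); apply/negP => h'; move: h h'; move: (A ^ 2)%N (N ^ 2)%N => a b; lia.
move: A N hA hN h; do 15! (case => //=); do 3! (case => //=).
Qed.

Lemma sq16 Z : (Z^2 %% 16 \in [:: 0; 1; 4; 9]).
Proof.
rewrite -modnXm; have : Z %% 16 < 16 by rewrite ltn_pmod.
move: (Z %% 16) => k; do 16! (case: k => [|k] //).
Qed.

Lemma pow4_16 Y : Y^4 %% 16 = if odd Y then 1 else 0.
Proof.
rewrite -modnXm -(odd_mod Y (erefl : odd 16 = false)); have : Y %% 16 < 16 by rewrite ltn_pmod.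
move: (Y %% 16) => k; do 16! (case: k => [|k] //).
Qed.

Lemma X_odd p X Y Z : p * X^4 = Z^2 + 41 * Y^4 -> coprime X Y -> odd X.
Proof.
move=> eq cXY; case: (boolP (odd X)) => // eX.
have oY : odd Y.
  case: (boolP (odd Y)) => // eY.
  have : 2 %| gcdn X Y by rewrite dvdn_gcd !dvdn2 eX eY.
  by rewrite (eqP cXY).
have h1 : (p * X^4) %% 16 = 0 by rewrite -modnMmr pow4_16 (negbTE eX) muln0.
have h2 := pow4_16 Y; rewrite oY in h2.
have h3 := sq16 Z.
move: eq h1 h2 h3; move: (p * X^4) (Z^2) (Y^4) => a b c.
rewrite !inE; lia.
Qed.

Lemma n41X p X Y Z : p * X^4 = Z^2 + 41 * Y^4 -> coprime X Y -> ~~ (41 %| X).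
Proof.
move=> eq cXY; apply/negP => h41.
have hX4 : 41 ^ 4 %| X ^ 4 by rewrite dvdn_exp2r.
have hZ2 : 41 %| Z ^ 2.
  rewrite -(dvdn_addl _ (dvdn_mulr (Y^4) (dvdnn 41))) -eq.
  by apply: dvdn_mull; apply: dvdn_trans hX4.
have hZ : 41 %| Z by move: hZ2; rewrite Euclid_dvdX // andbT.
have h2 : 41 * 41 %| 41 * Y ^ 4.
  rewrite -(dvdn_addr _ (_ : 41 * 41 %| Z^2)); last by rewrite mulnn dvdn_exp2r.
  rewrite -eq; apply: dvdn_mull; apply: dvdn_trans hX4; by [].
rewrite dvdn_pmul2l // Euclid_dvdX // andbT in h2.
have : 41 %| gcdn X Y by rewrite dvdn_gcd h41 h2.
by rewrite (eqP cXY).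
Qed.

Lemma copZY p X Y Z : prime p -> p * X^4 = Z^2 + 41 * Y^4 -> coprime X Y -> coprime Z (Y^2).
Proof.
move=> pp eq cXY; apply: cop_prime => q pq qZ qY2.
have qY : q %| Y by move: qY2; rewrite Euclid_dvdX // andbT.
have qpX : q %| p * X^4.
  by rewrite eq dvdn_add // ?dvdn_mull // dvdn_exp.
rewrite Euclid_dvdM // in qpX; case/orP: qpX => [qp|qX].
  rewrite dvdn_prime2 // in qp; move/eqP: qp => qp; subst q.
  have h : p * p %| p * X^4.
    rewrite eq dvdn_add //; first by rewrite mulnn dvdn_exp2r.
    apply: dvdn_mull; apply: (@dvdn_trans (Y ^ 2)).
      by rewrite mulnn dvdn_exp2r.
    have -> : Y ^ 4 = Y ^ 2 * Y ^ 2 by rewrite -expnD.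
    exact: dvdn_mulr.
  rewrite dvdn_pmul2l ?prime_gt0 // Euclid_dvdX // andbT in h.
  have : p %| gcdn X Y by rewrite dvdn_gcd h qY.
  by rewrite (eqP cXY) dvdn1 => /eqP p1; move: pp; rewrite p1.
rewrite Euclid_dvdX // andbT in qX.
have : q %| gcdn X Y by rewrite dvdn_gcd qX qY.
by rewrite (eqP cXY) dvdn1 => /eqP p1; move: pq; rewrite p1.
Qed.

Import GRing.Theory Num.Theory.
Local Open Scope ring_scope.

Lemma abs_sq (R : int) : (((`|R|%N)^2)%N)%:Z = R^+2.
Proof. rewrite -natz natrX natz abszE real_normK //. exact: num_real. Qed.
Lemma PX (a n : nat) : ((a ^ n)%N)%:Z = a%:Z ^+ n.
Proof. by rewrite -natz natrX natz. Qed.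

Lemma EuclidZ (q : nat) (a b : int) : prime q ->
  (q%:Z %| a * b)%Z = (q%:Z %| a)%Z || (q%:Z %| b)%Z.
Proof. by move=> pq; rewrite !dvdzE abszM Euclid_dvdM. Qed.

Lemma cop41 p : prime p -> p != 41%N -> coprime p 41.
Proof. by move=> pp p41; rewrite prime_coprime // dvdn_prime2. Qed.

Lemma pQ (p M : nat) (C D Z W : int) (X : nat) :
  prime p -> p != 41%N ->
  C^+2 + 41 * D^+2 = (M * p)%N%:Z ->
  Z^+2 + 41 * W^+2 = (p * X^4)%N%:Z ->
  (p%:Z %| Z*C - 41*W*D)%Z -> (p%:Z %| Z*D + W*C)%Z.
Proof.
move=> pp p41 hC hZ pP.
set P := Z*C - 41*W*D in pP *; set Q := Z*D + W*C.
have iden : 41 * Q^+2 = p%:Z^+2 * (M%:Z * X%:Z^+4) - P^+2.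
  have -> : p%:Z^+2 * (M%:Z * X%:Z^+4) = (Z^+2 + 41 * W^+2) * (C^+2 + 41 * D^+2).
    by rewrite hC hZ !PoszM; ring.
  rewrite /P /Q; ring.
have h1 : (p%:Z ^+ 2 %| 41 * Q^+2)%Z.
  by rewrite iden; apply: rpredB; [apply: dvdz_mulr|apply: dvdz_exp2r].
rewrite Gauss_dvdzr in h1; last first.
  by rewrite coprimez_pexpl // coprimezE; apply: cop41.
by rewrite dvdz_pexp2r in h1.
Qed.
Arguments pQ {p M C D Z W X}.

Lemma mainL (p N : nat) (C D Z W : int) (X : nat) :
  prime p -> p != 41%N -> (N = 3 \/ N = 27)%N ->
  C^+2 + 41 * D^+2 = (N^2 * p)%N%:Z ->
  Z^+2 + 41 * W^+2 = (p * X^4)%N%:Z ->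
  coprimez Z W -> odd X -> ~~ (41 %| X)%N ->
  (p%:Z %| Z*C - 41*W*D)%Z -> ~~ (3 %| Z*C - 41*W*D)%Z -> False.
Proof.
move=> pp p41 hN hC hZ cZW oX n41 pP n3P.
have pQ' := pQ pp p41 hC hZ pP.
set P := Z*C - 41*W*D in pP n3P *; set Q := Z*D + W*C in pQ' *.
case/dvdzP: pP => R hR; case/dvdzP: pQ' => S hS.
have pnz : p%:Z != 0 by rewrite eqz_nat -lt0n; exact: prime_gt0 pp.
have p2nz : p%:Z ^+ 2 != 0 by rewrite expf_neq0.
have eRS : R^+2 + 41 * S^+2 = (((N * X^2)^2)%N)%:Z.
  apply: (mulfI p2nz).
  have -> : p%:Z ^+ 2 * (R ^+ 2 + 41 * S ^+ 2) = P^+2 + 41 * Q^+2 by rewrite hR hS; ring.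
  have -> : P^+2 + 41 * Q^+2 = (Z^+2 + 41 * W^+2) * (C^+2 + 41 * D^+2) by rewrite /P /Q; ring.
  by rewrite hC hZ !PoszM; ring.
have eZ : R * C + 41 * S * D = (N^2)%N%:Z * Z.
  apply: (mulfI pnz).
  have -> : p%:Z * (R * C + 41 * S * D) = P * C + 41 * Q * D by rewrite hR hS; ring.
  have -> : P * C + 41 * Q * D = Z * (C^+2 + 41 * D^+2) by rewrite /P /Q; ring.
  by rewrite hC PoszM; ring.
have eW : S * C - R * D = (N^2)%N%:Z * W.
  apply: (mulfI pnz).
  have -> : p%:Z * (S * C - R * D) = Q * C - P * D by rewrite hR hS; ring.
  have -> : Q * C - P * D = W * (C^+2 + 41 * D^+2) by rewrite /P /Q; ring.
  by rewrite hC PoszM; ring.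
have eqn : ((`|R|^2 + 41 * `|S|^2)%N = (N * X^2)^2)%N.
  by apply/eqP; rewrite -eqz_nat PoszD PoszM !abs_sq eRS.
apply: (@pyth _ _ _ eqn); last 2 first.
- exact: t4.
- by move=> d; apply: nq41.
apply: cop_prime => q pq qR qt.
have q41s : (q %| 41 * `|S|^2)%N.
  by rewrite -(dvdn_addr _ (dvdn_exp (isT : 0 < 2)%N qR)) eqn dvdn_exp.
rewrite Euclid_dvdM // in q41s; case/orP: q41s => [q41|qS].
  rewrite dvdn_prime2 // in q41; move/eqP: q41 => q41; subst q.
  move: qt; rewrite Euclid_dvdM // Euclid_dvdX //= andbT (negbTE n41) orbF.
  by case: hN => ->.
rewrite Euclid_dvdX // andbT in qS.
have qRz : (q%:Z %| R)%Z by rewrite dvdzE.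
have qSz : (q%:Z %| S)%Z by rewrite dvdzE.
case: (eqVneq q 3) => [q3|q3].
  subst q; case/negP: n3P; rewrite hR; exact: dvdz_mulr.
have cqN : coprimez q%:Z (N^2)%N%:Z.
  rewrite coprimezE /= coprime_pexpr //.
  rewrite prime_coprime //; case: hN => ->.
    by rewrite dvdn_prime2.
  rewrite (_ : 27 = 3 ^ 3)%N // Euclid_dvdX //= dvdn_prime2 //.
  by rewrite (negbTE q3).
have qZ : (q%:Z %| Z)%Z.
  rewrite -(Gauss_dvdzr _ cqN) -eZ.
  by apply: rpredD; [apply: dvdz_mulr|apply: dvdz_mulr; apply: dvdz_mull].
have qW : (q%:Z %| W)%Z.
  rewrite -(Gauss_dvdzr _ cqN) -eW.
  by apply: rpredB; [apply: dvdz_mulr|apply: dvdz_mulr].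
move: cZW; rewrite coprimezE /coprime => /eqP g1.
have : (q %| gcdn `|Z| `|W|)%N by move: qZ qW; rewrite dvdn_gcd !dvdzE /= => -> ->.
by rewrite g1 dvdn1 => /eqP q1; move: pq; rewrite q1.
Qed.

Lemma p_ne41 (p : nat) (m n : int) : p%:Z = 5 * m ^+ 2 + 4 * m * n + 9 * n ^+ 2 -> p != 41%N.
Proof.
move=> hp; apply/eqP => e; subst p.
have e5 : (205%N)%:Z = 5 * (41%N)%:Z by [].
have : ((`|(5 * m + 2 * n)%R|%N ^ 2 + 41 * `|n|%N ^ 2)%N)%:Z = (205%N)%:Z.
  by rewrite PoszD PoszM !abs_sq e5 [X in _ = 5 * X]hp; ring.
by move/eqP; rewrite eqz_nat (negbTE (no205 _ _)).
Qed.

Lemma three_p (p : nat) (m n : int) : prime p -> p != 3%N ->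
  p%:Z = 5 * m ^+ 2 + 4 * m * n + 9 * n ^+ 2 ->
  ~~ (3 %| m)%Z /\ ~~ (3 %| 2 * m + n)%Z.
Proof.
move=> pp p3 hp.
have H : (3 %| p%:Z)%Z -> False.
  rewrite dvdzE /= dvdn_prime2 // eq_sym; exact/negP.
split; apply/negP => h; apply: H.
  rewrite hp; have -> : 5 * m ^+ 2 + 4 * m * n + 9 * n ^+ 2 = m * (5 * m + 4 * n) + 3 * (3 * n ^+ 2) by ring.
  apply: rpredD; [exact: dvdz_mulr|apply: dvdz_mulr; exact: dvdzz].
rewrite hp; have -> : 5 * m ^+ 2 + 4 * m * n + 9 * n ^+ 2 = (2 * m + n) * m + 3 * (m ^+ 2 + m * n + 3 * n ^+ 2) by ring.
apply: rpredD; [exact: dvdz_mulr|apply: dvdz_mulr; exact: dvdzz].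
Qed.

Lemma handle (p : nat) (m n Z W : int) (X : nat) : prime p -> p != 41%N -> p != 3%N ->
  p%:Z = 5 * m ^+ 2 + 4 * m * n + 9 * n ^+ 2 ->
  Z^+2 + 41 * W^+2 = (p * X^4)%N%:Z -> coprimez Z W -> odd X -> ~~ (41 %| X)%N ->
  (p%:Z %| Z * (2 * m + 9 * n) - 41 * W * m)%Z -> False.
Proof.
move=> pp p41 p3 hp hZ cZW oX n41 pP.
have [n3m n3mn] := @three_p p m n pp p3 hp.
have p3' : (3 : nat) != 0%N by [].
have hC1 : (2 * m + 9 * n)^+2 + 41 * m^+2 = ((3^2 * p)%N)%:Z.
  by rewrite PoszM hp; ring.
have hC2 : (59 * m + 40 * n)^+2 + 41 * (2 * m - 11 * n)^+2 = ((27^2 * p)%N)%:Z.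
  by rewrite PoszM hp; ring.
case: (boolP (3 %| W - Z)%Z) => h3.
- have h3' : ~~ (3 %| W + Z)%Z.
    apply/negP => h3'.
    have : (3 %| 2 * W)%Z.
      have -> : 2 * W = (W + Z) + (W - Z) by ring.
      exact: rpredD.
    rewrite (EuclidZ _ _ _ (isT : prime 3)) /= => hW.
    have hZ3 : (3 %| Z)%Z.
      have -> : Z = (W + Z) - W by ring.
      exact: rpredB.
    move: cZW; rewrite coprimezE /coprime => /eqP g1.
    have : (3 %| gcdn `|Z| `|W|)%N by move: hZ3 hW; rewrite dvdn_gcd !dvdzE /= => -> ->.
    by rewrite g1.
  have pQ1 := pQ pp p41 hC1 hZ pP.
  apply: (@mainL _ _ _ _ _ _ _ pp p41 (or_intror erefl) hC2 hZ cZW oX n41).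
  + have : (p%:Z %| 9 * (Z * (59 * m + 40 * n) - 41 * W * (2 * m - 11 * n)))%Z.
      have -> : 9 * (Z * (59 * m + 40 * n) - 41 * W * (2 * m - 11 * n)) =
        40 * (Z * (2 * m + 9 * n) - 41 * W * m) + 451 * (Z * m + W * (2 * m + 9 * n)) by ring.
      by apply: rpredD; apply: dvdz_mull.
    rewrite EuclidZ // => /orP [|//].
    by move=> h9; exfalso; move: h9; rewrite (_ : 9 = 3 * 3) // EuclidZ // orbb dvdzE /= dvdn_prime2 // (negbTE p3).
  + apply/negP => h.
    have : (3 %| (2 * m + n) * (Z + W))%Z.
      have -> : (2 * m + n) * (Z + W) = (Z * (59 * m + 40 * n) - 41 * W * (2 * m - 11 * n))
         - 3 * (Z * (19 * m + 13 * n) - W * (28 * m - 150 * n)) by ring.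
      by apply: rpredB => //; apply: dvdz_mulr.
    rewrite (EuclidZ _ _ _ (isT : prime 3)) (negbTE n3mn) /=.
    by rewrite addrC (negbTE h3').
- apply: (@mainL _ _ _ _ _ _ _ pp p41 (or_introl erefl) hC1 hZ cZW oX n41 pP).
  apply/negP => h.
  have : (3 %| m * (W - Z))%Z.
    have -> : m * (W - Z) = (Z * (2 * m + 9 * n) - 41 * W * m) - 3 * (Z * m + 3 * Z * n - 14 * W * m) by ring.
    by apply: rpredB => //; apply: dvdz_mulr.
  by rewrite (EuclidZ _ _ _ (isT : prime 3)) (negbTE n3m) (negbTE h3).
Qed.

Arguments X_odd {p X Y Z}. Arguments n41X {p X Y Z}. Arguments copZY {p X Y Z}. Arguments p_ne41 {p m n}.

Lemma p_ne3 (p : nat) (m n : int) : p%:Z = 5 * m ^+ 2 + 4 * m * n + 9 * n ^+ 2 -> p != 3%N.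
Proof.
move=> hp; apply/eqP => e; subst p.
have h2 : 5 * (3%N)%:Z = (5 * m + 2 * n)^+2 + 41 * n^+2 by rewrite hp; ring.
move: h2; rewrite (_ : 5 * (3%N)%:Z = 15) // => h2.
nia.
Qed.

Lemma nat_case (p : nat) (m n : int) (X Y Z : nat) : prime p ->
  p%:Z = 5 * m ^+ 2 + 4 * m * n + 9 * n ^+ 2 ->
  (p * X^4 = Z^2 + 41 * Y^4)%N -> coprime X Y -> False.
Proof.
move=> pp hp eq cXY.
have p41 := p_ne41 hp; have p3 := @p_ne3 p m n hp.
have oX := X_odd eq cXY; have n41 := n41X eq cXY; have cZY := copZY pp eq cXY.
have hZ : (Z%:Z)^+2 + 41 * ((Y^2)%N%:Z)^+2 = (p * X^4)%N%:Z.
  by rewrite -!PX -expnM -PoszM -PoszD eq.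
have cZW : coprimez Z%:Z (Y^2)%N%:Z by rewrite coprimezE.
have hC1 : (2 * m + 9 * n)^+2 + 41 * m^+2 = ((3^2 * p)%N)%:Z.
  by rewrite PoszM hp; ring.
set Zi := Z%:Z in hZ cZW *; set Wi := (Y^2)%N%:Z in hZ cZW *.
set C := 2 * m + 9 * n in hC1 *.
have hprod : (p%:Z %| (Zi * C - 41 * Wi * m) * (Zi * C + 41 * Wi * m))%Z.
  have -> : (Zi * C - 41 * Wi * m) * (Zi * C + 41 * Wi * m) =
     (Zi^+2 + 41 * Wi^+2) * C^+2 - 41 * Wi^+2 * (C^+2 + 41 * m^+2) by ring.
  rewrite hZ hC1 !PoszM; apply: rpredB.
    by apply: dvdz_mulr; apply: dvdz_mulr.
  by apply: dvdz_mull; apply: dvdz_mull.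
rewrite EuclidZ // in hprod; case/orP: hprod => h.
  exact: (@handle p m n Zi Wi X pp p41 p3 hp hZ cZW oX n41 h).
apply: (@handle p m n Zi (- Wi) X pp p41 p3 hp _ _ oX n41).
- by rewrite sqrrN.
- by rewrite coprimezN.
- by rewrite (_ : Zi * (2 * m + 9 * n) - 41 * - Wi * m = Zi * C + 41 * Wi * m) //; rewrite /C; ring.
Qed.

Lemma abs4 (R : int) : (((`|R|%N)^4)%N)%:Z = R^+4.
Proof.
by rewrite PX abszE -[4%N]/(2 * 2)%N !exprM real_normK // num_real.
Qed.

Lemma int_case (p : nat) (m n : int) (X0 Y0 Z0 : int) : prime p ->
  p%:Z = 5 * m ^+ 2 + 4 * m * n + 9 * n ^+ 2 ->
  p%:Z * X0^+4 = Z0^+2 + 41 * Y0^+4 -> X0 != 0 -> False.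
Proof.
move=> pp hp hI nX.
set a := `|X0|%N; set b := `|Y0|%N; set c := `|Z0|%N.
have hN : (p * a^4 = c^2 + 41 * b^4)%N.
  have h : p%:Z * ((a^4)%N)%:Z = ((c^2)%N)%:Z + 41 * ((b^4)%N)%:Z.
    by rewrite /a /b /c abs4 abs_sq abs4.
  by apply/eqP; rewrite -eqz_nat; apply/eqP; exact: h.
have a0 : (0 < a)%N by rewrite absz_gt0.
set g := gcdn a b.
have g0 : (0 < g)%N by rewrite gcdn_gt0 a0.
have ea : a = (a %/ g * g)%N by rewrite divnK // dvdn_gcdl.
have eb : b = (b %/ g * g)%N by rewrite divnK // dvdn_gcdr.
have gc : (g ^ 2 %| c)%N.
  rewrite -(@dvdn_pexp2r _ _ 2) // -expnM /=.
  rewrite -(dvdn_addl _ (_ : (g ^ 4 %| 41 * b ^ 4)%N)); last first.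
    by apply: dvdn_mull; rewrite eb expnMn dvdn_mull.
  by rewrite -hN; apply: dvdn_mull; rewrite ea expnMn dvdn_mull.
have ec : c = (c %/ g ^ 2 * g ^ 2)%N by rewrite divnK.
have cop : coprime (a %/ g) (b %/ g).
  have h : (gcdn (a %/ g) (b %/ g) * g = 1 * g)%N by rewrite muln_gcdl -ea -eb mul1n.
  by move/eqP: h; rewrite eqn_pmul2r.
apply: (@nat_case p m n (a %/ g) (b %/ g) (c %/ g ^ 2) pp hp _ cop).
have g4 : (0 < g ^ 4)%N by rewrite expn_gt0 g0.
apply/eqP; rewrite -(eqn_pmul2r g4); apply/eqP.
move: hN; rewrite {1}ea {1}eb {1}ec.
move: (a %/ g)%N (b %/ g)%N (c %/ g ^ 2)%N => a' b' c'.
rewrite !expnMn -expnD -mulnA => ->.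
by rewrite mulnDl mulnA.
Qed.

Theorem proposition1 (p : nat) (m n : int) :
  prime p ->
  (p%:Z = 5 * m ^+ 2 + 4 * m * n + 9 * n ^+ 2) ->
  forall x y z : rat,
    p%:R * x ^+ 4 - 41 * y ^+ 4 = z ^+ 2 ->
    x = 0 /\ y = 0 /\ z = 0.
Proof.
move=> pp hp x y z eq.
have x0 : x = 0.
  apply/eqP; apply/negPn/negP => nx.
  set dx := denq x; set dy := denq y; set dz := denq z.
  apply: (@int_case p m n (numq x * dy * dz) (numq y * dx * dz)
            (numq z * dx * dy * (dx * dy * dz)) pp hp).
    apply: (@intr_inj rat).
    rewrite !(rmorphD, rmorphM, rmorphXn) /= !numqE -/dx -/dy -/dz.
    rewrite -natz rmorph_nat.
    apply/eqP; rewrite -subr_eq0; apply/eqP.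
    set L := (dx%:~R * dy%:~R * dz%:~R : rat).
    transitivity (L ^+ 4 * (p%:R * x ^+ 4 - 41 * y ^+ 4 - z ^+ 2)).
      rewrite /L; ring.
    by rewrite eq subrr mulr0.
  by rewrite !mulf_neq0 // ?numq_eq0 // denq_neq0.
split => //.
have h : z ^+ 2 + 41 * y ^+ 4 = 0.
  by rewrite -eq x0 expr0n /= mulr0 sub0r addNr.
have hz : 0 <= z ^+ 2 by rewrite sqr_ge0.
have hy : 0 <= 41 * y ^+ 4 by rewrite mulr_ge0 // (_ : 4 = 2 * 2)%N // exprM sqr_ge0.
move/eqP: h; rewrite paddr_eq0 // => /andP [/eqP h1 /eqP h2].
split; last by move/eqP: h1; rewrite sqrf_eq0 => /eqP.
by move/eqP: h2; rewrite mulf_eq0 /= expf_eq0 /= => /eqP.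
Qed.
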